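(* Let $L$ and $K$ be finite-dimensional Lie superalgebras over a field $\mathbb{F}$ of characteristic different from $2$ and $3$, with $\dim L=\dim K$. Then $L$ and $K$ are isoclinic if and only if $L\cong K$.
   Context: A Lie superalgebra is a $\mathbb{Z}_2$-graded vector space $L=L_{\bar 0}\oplus L_{\bar 1}$ with a bilinear bracket satisfying $[L_\alpha,L_\beta]\subseteq L_{\alpha+\beta}$, graded skew-symmetry and the graded Jacobi identity. Homomorphisms are even (degree-preserving) linear maps preserving the bracket. $Z(L)=\{z\in L:[z,x]=0\ \forall x\in L\}$ is the center and $L'=[L,L]$ the derived superalgebra. Lie superalgebras $L$ and $M$ are isoclinic, written $L\sim M$, if there are Lie superalgebra isomorphisms $\varphi:L/Z(L)\to M/Z(M)$ and $\theta:L'\to M'$ such that $\theta([l,m])=[k,r]$ for all $l,m\in L$ and all $k,r\in M$ with $k+Z(M)=\varphi(l+Z(L))$ and $r+Z(M)=\varphi(m+Z(L))$. Dimension means superdimension $(\dim L_{\bar0}\mid\dim L_{\bar1})$. *)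

(* Defs.v *)
From HB Require Import structures.
From mathcomp Require Import all_boot all_order all_algebra.
Set Implicit Arguments. Unset Strict Implicit. Unset Printing Implicit Defensive.
Import GRing.Theory.
Local Open Scope ring_scope.

(* The carrier is a finite-dimensional F-vector space L (vectType F);
   the Z_2-grading is g : bool -> {vspace L}  (false = even, true = odd);
   the bracket is br : L -> L -> L. *)

Definition psign (F : fieldType) (a b : bool) : F := if a && b then -1 else 1.

Definition lie_superalgebra (F : fieldType) (L : vectType F)
    (g : bool -> {vspace L}) (br : L -> L -> L) : Prop :=
  [/\
      (g false + g true)%VS = fullv /\ directv (g false + g true),
      (forall (a : F) (x y z : L), br (a *: x + y) z = a *: br x z + br y z)
      /\ (forall (a : F) (x y z : L), br z (a *: x + y) = a *: br z x + br z y),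
      (forall (a b : bool) (x y : L), x \in g a -> y \in g b ->
          br x y \in g (addb a b)),
      (forall (a b : bool) (x y : L), x \in g a -> y \in g b ->
          br x y = - (psign F a b *: br y x)) &
      (forall (a b c : bool) (x y z : L), x \in g a -> y \in g b -> z \in g c ->
          psign F a c *: br x (br y z) + psign F b a *: br y (br z x)
          + psign F c b *: br z (br x y) = 0)].

Definition lin (F : fieldType) (L M : vectType F) (f : L -> M) : Prop :=
  forall (a : F) (x y : L), f (a *: x + y) = a *: f x + f y.

Definition ls_isomorphic (F : fieldType) (L M : vectType F)
    (gL : bool -> {vspace L}) (brL : L -> L -> L)
    (gM : bool -> {vspace M}) (brM : M -> M -> M) : Prop :=
  exists f : L -> M,
    [/\ lin f, bijective f,
        (forall (b : bool) (x : L), x \in gL b -> f x \in gM b) &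
        (forall x y : L, f (brL x y) = brM (f x) (f y))].

Definition in_center (F : fieldType) (L : vectType F) (br : L -> L -> L) (z : L) : Prop :=
  forall x : L, br z x = 0.

Definition in_derived (F : fieldType) (L : vectType F) (br : L -> L -> L) (x : L) : Prop :=
  exists s : seq (L * L), x \in <<[seq br p.1 p.2 | p <- s]>>%VS.

(* The isomorphism  varphi : L/Z(L) -> M/Z(M)  is encoded by a linear
   lift phi : L -> M (x + Z(L) |-> phi x + Z(M)); the isomorphism theta : L' -> M'
   by a linear map theta : L -> M whose restriction to L' is considered. *)
Definition isoclinic (F : fieldType) (L M : vectType F)
    (gL : bool -> {vspace L}) (brL : L -> L -> L)
    (gM : bool -> {vspace M}) (brM : M -> M -> M) : Prop :=
  exists (phi theta : L -> M),
    [/\ (* varphi is a well-defined injective linear map L/Z(L) -> M/Z(M) *)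
        lin phi /\ (forall x : L, in_center brM (phi x) <-> in_center brL x),
        (forall m : M, exists x : L, in_center brM (m - phi x))
        /\ (* varphi is even: (L/Z(L))_b = (L_b + Z(L))/Z(L) is sent into (M_b + Z(M))/Z(M) *)
        (forall (b : bool) (x : L), x \in gL b ->
           exists z : M, in_center brM z /\ phi x - z \in gM b),
        (forall x y : L, in_center brM (phi (brL x y) - brM (phi x) (phi y)))
        /\
        [/\ lin theta,
            (forall x : L, in_derived brL x -> in_derived brM (theta x)),
            (forall x : L, in_derived brL x -> theta x = 0 -> x = 0) &
            (forall m : M, in_derived brM m ->
               exists x : L, in_derived brL x /\ theta x = m)],
        (forall (b : bool) (x : L), in_derived brL x -> x \in gL b -> theta x \in gM b)
        /\
        (forall x y : L, in_derived brL x -> in_derived brL y ->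
           theta (brL x y) = brM (theta x) (theta y)) &
        (forall (l m : L) (k r : M),
           in_center brM (k - phi l) -> in_center brM (r - phi m) ->
           theta (brL l m) = brM k r)].

(* Main.v *)
Require Import Defs.
From HB Require Import structures.
From mathcomp Require Import all_boot all_order all_algebra.
From Stdlib Require Import Classical FunctionalExtensionality Lia.
From mathcomp Require Import zify.
Set Implicit Arguments. Unset Strict Implicit.
Import GRing.Theory.
Local Open Scope ring_scope.

Lemma vspace_of_pred (F : fieldType) (L : vectType F) (P : L -> Prop) :
  P 0 -> (forall (a : F) x y, P x -> P y -> P (a *: x + y)) ->
  exists U : {vspace L}, forall x, x \in U <-> P x.
Proof.
move=> P0 Pc.
apply: NNPP => nU.
suff: forall n, exists U : {vspace L}, (forall x, x \in U -> P x) /\ (n <= \dim U)%N.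
  move/(_ (\dim (fullv : {vspace L})).+1) => [U [_ hU]].
  by have := dimvS (subvf U); rewrite leqNgt hU.
elim=> [|n [U [hU hn]]].
  exists 0%VS; split=> // x; rewrite memv0 => /eqP ->; exact: P0.
have [x [Px xU]] : exists x, P x /\ x \notin U.
  apply: NNPP => h; apply: nU; exists U => x; split; first exact: hU.
  move=> Px; apply: NNPP => xU; apply: h; exists x; split => //; exact/negP.
exists (U + <[x]>)%VS; split.
  move=> y /memv_addP [u uU [v /vlineP [a ->] ->]].
  rewrite addrC; apply: Pc => //; exact: hU.
apply: leq_ltn_trans hn _.
rewrite (ltn_leqif (dimv_leqif_sup (addvSl U <[x]>))).
apply/negP => sub; apply: (negP xU); apply: (subvP sub).
apply: (subvP (addvSr U _)); exact: memv_line.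
Qed.

Lemma lin_hom (F : fieldType) (L M : vectType F) (f : L -> M) :
  lin f -> exists h : 'Hom(L, M), forall x, h x = f x.
Proof.
move=> hf.
have lf : linear f by move=> a x y; exact: hf.
pose flM := GRing.isLinear.Build _ _ _ _ f lf.
pose fL : {linear _ -> _} := HB.pack f flM.
by exists (linfun fL) => x; rewrite lfunE.
Qed.

Lemma daddv_pi_other (F : fieldType) (L : vectType F) (U V : {vspace L}) v :
  (U :&: V = 0)%VS -> v \in V -> daddv_pi U V v = 0.
Proof.
move=> UV vV.
have := daddv_pi_add UV (memv_add (mem0v U) vV); rewrite add0r.
have VU : (V :&: U = 0)%VS by rewrite capvC.
by rewrite (daddv_pi_id VU vV) => /(canRL (addrK v)); rewrite subrr.
Qed.

Lemma inj_dim (F : fieldType) (L M : vectType F) (A : {vspace L}) (C : {vspace M}) :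
  (\dim A <= \dim C)%N -> exists g : 'Hom(L, M), (g @: A <= C)%VS /\ (A :&: lker g = 0)%VS.
Proof.
move=> hd.
pose X := vbasis A.
pose fX := take (\dim A) (vbasis C).
have [fL hfL] := linear_of_free X fX.
have frX : free X := basis_free (vbasisP A).
have frfX : free fX.
  have := basis_free (vbasisP C); rewrite -(cat_take_drop (\dim A) (vbasis C)).
  exact: catl_free.
have szfX : size fX = size X by rewrite size_takel ?size_tuple.
have mX := hfL frX szfX.
have spA : <<X>>%VS = A := span_basis (vbasisP A).
exists (linfun fL); split.
  rewrite -spA limg_span.
  have -> : map (linfun fL) X = fX by rewrite -mX; apply: eq_map => x; rewrite lfunE.
  apply/span_subvP => y /mem_take; exact: vbasis_mem.
apply/eqP; rewrite -dimv_eq0.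
have := limg_ker_dim (linfun fL) A.
rewrite -{2}spA limg_span.
have -> : map (linfun fL) X = fX by rewrite -mX; apply: eq_map => x; rewrite lfunE.
move: frfX; rewrite /free => /eqP ->; rewrite szfX.
rewrite size_tuple.
by move=> /eqP; rewrite -{2}[\dim A]add0n eqn_add2r.
Qed.

Lemma hD (F : fieldType) (U V : vectType F) (f : 'Hom(U, V)) x y : f (x + y) = f x + f y.
Proof. exact: linearD. Qed.
Lemma hB (F : fieldType) (U V : vectType F) (f : 'Hom(U, V)) x y : f (x - y) = f x - f y.
Proof. exact: linearB. Qed.
Lemma hN (F : fieldType) (U V : vectType F) (f : 'Hom(U, V)) x : f (- x) = - f x.
Proof. exact: linearN. Qed.
Lemma h0 (F : fieldType) (U V : vectType F) (f : 'Hom(U, V)) : f 0 = 0.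
Proof. exact: linear0. Qed.
Lemma hP (F : fieldType) (U V : vectType F) (f : 'Hom(U, V)) (a : F) x y :
  f (a *: x + y) = a *: f x + f y.
Proof. exact: linearP. Qed.

Section LS.
Variables (F : fieldType) (L : vectType F) (g : bool -> {vspace L}) (br : L -> L -> L).
Hypothesis hL : lie_superalgebra g br.

Definition pr b := daddv_pi (g b) (g (~~ b)).

Lemma g_cap b : (g b :&: g (~~ b) = 0)%VS.
Proof.
case: hL => [[_ hd] _ _ _ _]; move/directv_addP: hd; case: b => //= h.
by rewrite capvC.
Qed.

Lemma pr_mem b x : pr b x \in g b.
Proof. exact: memv_pi. Qed.

Lemma pr_add b x : pr b x + pr (~~ b) x = x.
Proof.
rewrite /pr negbK; apply: (daddv_pi_add (g_cap b)).
case: hL => [[hf _] _ _ _ _]; case: b; rewrite /= ?(addvC (g true)) hf; exact: memvf.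
Qed.

Lemma pr_id b x : x \in g b -> pr b x = x.
Proof. exact/daddv_pi_id/g_cap. Qed.

Lemma pr_0 b x : x \in g (~~ b) -> pr b x = 0.
Proof. exact/daddv_pi_other/g_cap. Qed.

Lemma g0 b x : x \in g b -> x \in g (~~ b) -> x = 0.
Proof.
by move=> h1 h2; apply/eqP; rewrite -memv0 -(g_cap b) memv_cap h1 h2.
Qed.

Lemma g_uniq b u v : u \in g b -> v \in g (~~ b) -> u + v = 0 -> u = 0 /\ v = 0.
Proof.
move=> hu hv /eqP; rewrite addr_eq0 => /eqP e.
have u0 : u = 0 by apply: (@g0 b u hu); rewrite e memvN.
by split => //; move: e; rewrite u0 => /eqP; rewrite eq_sym oppr_eq0 => /eqP.
Qed.

Lemma pr_hom b c t : t \in g c -> pr b t = t \/ pr b t = 0.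
Proof.
case: b; case: c => h.
- by left; apply: pr_id.
- by right; apply: pr_0.
- by right; apply: pr_0.
- by left; apply: pr_id.
Qed.

Lemma brDl x y z : br (x + y) z = br x z + br y z.
Proof. by case: hL => [_ [hl _] _ _ _]; rewrite -{1}[x]scale1r hl scale1r. Qed.
Lemma brDr x y z : br z (x + y) = br z x + br z y.
Proof. by case: hL => [_ [_ hr] _ _ _]; rewrite -{1}[x]scale1r hr scale1r. Qed.
Lemma br0l y : br 0 y = 0.
Proof. have h := brDl 0 0 y; rewrite addr0 in h. by apply: (addrI (br 0 y)); rewrite addr0 -h. Qed.
Lemma br0r y : br y 0 = 0.
Proof. have h := brDr 0 0 y; rewrite addr0 in h. by apply: (addrI (br y 0)); rewrite addr0 -h. Qed.
Lemma brZl a x z : br (a *: x) z = a *: br x z.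
Proof. by case: hL => [_ [hl _] _ _ _]; rewrite -[a *: x]addr0 hl br0l addr0. Qed.
Lemma brZr a x z : br z (a *: x) = a *: br z x.
Proof. by case: hL => [_ [_ hr] _ _ _]; rewrite -[a *: x]addr0 hr br0r addr0. Qed.
Lemma brNl x z : br (- x) z = - br x z.
Proof. by rewrite -scaleN1r brZl scaleN1r. Qed.
Lemma brNr x z : br z (- x) = - br z x.
Proof. by rewrite -scaleN1r brZr scaleN1r. Qed.
Lemma brBl x y z : br (x - y) z = br x z - br y z.
Proof. by rewrite brDl brNl. Qed.
Lemma brBr x y z : br z (x - y) = br z x - br z y.
Proof. by rewrite brDr brNr. Qed.

Lemma br_gr a c x y : x \in g a -> y \in g c -> br x y \in g (addb a c).
Proof. by case: hL => [_ _ h _ _]; exact: h. Qed.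

Definition cen z := in_center br z.
Definition der x := in_derived br x.

Lemma cen_lin a x y : cen x -> cen y -> cen (a *: x + y).
Proof. by move=> hx hy z; rewrite brDl brZl hx hy scaler0 addr0. Qed.
Lemma cen0 : cen 0.
Proof. by move=> z; rewrite br0l. Qed.
Lemma cenD x y : cen x -> cen y -> cen (x + y).
Proof. by move=> hx hy; rewrite -[x]scale1r; apply: cen_lin. Qed.
Lemma cenZ a x : cen x -> cen (a *: x).
Proof. by move=> hx; rewrite -[_ *: _]addr0; apply: cen_lin => //; exact: cen0. Qed.
Lemma cenN x : cen x -> cen (- x).
Proof. by move=> hx; rewrite -scaleN1r; apply: cenZ. Qed.
Lemma cenB x y : cen x -> cen y -> cen (x - y).
Proof. by move=> hx hy; apply: cenD => //; apply: cenN. Qed.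

Lemma cen_pr b z : cen z -> cen (pr b z).
Proof.
move=> hz y.
have key : forall a c, br (pr a z) (pr c y) = 0.
  move=> a c; have := hz (pr c y); rewrite -{1}(pr_add a z) brDl => h.
  have h2 : br (pr (~~ a) z) (pr c y) \in g (~~ addb a c).
    by rewrite -addNb; apply: br_gr; apply: pr_mem.
  by have [] := g_uniq (br_gr (pr_mem a z) (pr_mem c y)) h2 h.
by rewrite -(pr_add false y) brDr !key addr0.
Qed.

Lemma cen_r z x : cen z -> br x z = 0.
Proof.
move=> hz.
have key : forall a c, br (pr c x) (pr a z) = 0.
  move=> a c; case: hL => [_ _ _ hs _].
  by rewrite (hs c a) ?pr_mem // (cen_pr a hz) scaler0 oppr0.
by rewrite -(pr_add false x) -(pr_add false z) brDl !brDr !key !addr0.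
Qed.

Lemma der_br x y : der (br x y).
Proof. by exists [:: (x, y)]; exact: memv_span1. Qed.

Lemma der_lin a x y : der x -> der y -> der (a *: x + y).
Proof.
move=> [s1 h1] [s2 h2]; exists (s1 ++ s2).
by rewrite map_cat span_cat; apply: memv_add => //; apply: memvZ.
Qed.
Lemma der0 : der 0.
Proof. by exists [::]; rewrite /= span_nil mem0v. Qed.
Lemma derD x y : der x -> der y -> der (x + y).
Proof. by move=> hx hy; rewrite -[x]scale1r; apply: der_lin. Qed.
Lemma derZ a x : der x -> der (a *: x).
Proof. by move=> hx; rewrite -[_ *: _]addr0; apply: der_lin => //; exact: der0. Qed.
Lemma derN x : der x -> der (- x).
Proof. by move=> hx; rewrite -scaleN1r; apply: derZ. Qed.
Lemma derB x y : der x -> der y -> der (x - y).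
Proof. by move=> hx hy; apply: derD => //; apply: derN. Qed.

Lemma br_split x y : br x y = br (pr false x) (pr false y) + br (pr false x) (pr true y)
   + (br (pr true x) (pr false y) + br (pr true x) (pr true y)).
Proof.
by rewrite -{1}(pr_add false x) -{1}(pr_add false y) brDl !brDr.
Qed.

Lemma der_pr b x : der x -> der (pr b x).
Proof.
have [DV hDV] := @vspace_of_pred F L der der0 der_lin.
move=> [s hs]; apply/hDV.
have sub : (<<[seq br p.1 p.2 | p <- s]>> <= pr b @^-1: DV)%VS.
  apply/span_subvP => y /mapP [[u v] _ ->] /=.
  rewrite -memv_preim; apply/hDV.
  have hom : forall a c, der (pr b (br (pr a u) (pr c v))).
    move=> a c; have [->|->] := pr_hom b (br_gr (pr_mem a u) (pr_mem c v)).
      exact: der_br.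
    exact: der0.
  by rewrite br_split !linearD /=; repeat apply: derD => //.
by move: (subvP sub x hs); rewrite -memv_preim.
Qed.

End LS.

Lemma iso_isoclinic (F : fieldType) (L K : vectType F)
    (gL : bool -> {vspace L}) (brL : L -> L -> L)
    (gK : bool -> {vspace K}) (brK : K -> K -> K)
    (hL : lie_superalgebra gL brL) (hK : lie_superalgebra gK brK) :
  ls_isomorphic gL brL gK brK -> isoclinic gL brL gK brK.
Proof.
move=> [f [lf [finv fK Kf] ev hbr]].
have [Fh hF] := @lin_hom F L K f lf.
have ef : f = Fh by apply: functional_extensionality => x; rewrite hF.
subst f.
have f0 : Fh 0 = 0 by rewrite linear0.
have finj x : Fh x = 0 -> x = 0.
  by move=> h; rewrite -[x]fK h -f0 fK.
exists Fh, Fh; split.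
- split => // x; split.
    by move=> h y; apply: finj; rewrite hbr h.
  by move=> h m; rewrite -(Kf m) -hbr h f0.
- split.
    by move=> m; exists (finv m); rewrite Kf subrr; exact: (cen0 hK).
  move=> b x hx; exists 0; split; first exact: (cen0 hK).
  by rewrite subr0; apply: ev.
- split; first by move=> x y; rewrite hbr subrr; exact: (cen0 hK).
  split => //.
  + move=> x [s hs]; exists [seq (Fh p.1, Fh p.2) | p <- s].
    have e : map Fh [seq brL p.1 p.2 | p <- s] =
             [seq brK p.1 p.2 | p <- [seq (Fh p.1, Fh p.2) | p <- s]].
      by rewrite -!map_comp; apply: eq_map => p /=; rewrite hbr.
    by rewrite -e -limg_span; apply: memv_img.
  + by move=> x _; apply: finj.
  + move=> m [s hs].
    pose s' := [seq (finv p.1, finv p.2) | p <- s].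
    have e : map Fh [seq brL p.1 p.2 | p <- s'] = [seq brK p.1 p.2 | p <- s].
      by rewrite -!map_comp; apply: eq_map => p /=; rewrite hbr !Kf.
    have : m \in (Fh @: <<[seq brL p.1 p.2 | p <- s']>>)%VS by rewrite limg_span e.
    case/memv_imgP => x hx ->; exists x; split => //; by exists s'.
- split; first by move=> b x _; apply: ev.
  by move=> x y _ _; apply: hbr.
- move=> l m k r hk hr.
  rewrite hbr -[k](subrK (Fh l)) -[r](subrK (Fh m)) (brDl hK) hk add0r.
  by rewrite (brDr hK) (cen_r hK _ hr) add0r.
Qed.

Lemma addsubACA (V : zmodType) (a b c d : V) : (a + b) - (c + d) = (a - c) + (b - d).
Proof. by rewrite opprD addrACA. Qed.

Lemma isoclinic_iso (F : fieldType) (L K : vectType F)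
    (gL : bool -> {vspace L}) (brL : L -> L -> L)
    (gK : bool -> {vspace K}) (brK : K -> K -> K)
    (hL : lie_superalgebra gL brL) (hK : lie_superalgebra gK brK)
    (hdim : forall b, \dim (gL b) = \dim (gK b)) :
  isoclinic gL brL gK brK -> ls_isomorphic gL brL gK brK.
Proof.
move=> [phi [theta [[lphi hcen] [hsurj hev] [hbr [lth thD thinj thsurj]] [thev thbr] hcomp]]].
have [Ph hP] := @lin_hom F L K phi lphi.
have [Th hT] := @lin_hom F L K theta lth.
have ep : phi = Ph by apply: functional_extensionality => x; rewrite hP.
have et : theta = Th by apply: functional_extensionality => x; rewrite hT.
subst phi theta; clear hP hT lphi lth.
have [ZL hZL] := @vspace_of_pred F L (cen brL) (cen0 hL) (cen_lin hL).
have [ZK hZK] := @vspace_of_pred F K (cen brK) (cen0 hK) (cen_lin hK).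
have [DL hDL] := @vspace_of_pred F L (der brL) (der0 brL) (@der_lin F L brL).
have [DK hDK] := @vspace_of_pred F K (der brK) (der0 brK) (@der_lin F K brK).
have F1 : forall z, der brL z -> cen brK (Th z - Ph z).
  have c0 : cen brK (Th 0 - Ph 0).
    by rewrite !h0 subrr; exact: cen0 hK.
  have cl : forall (a : F) x y, cen brK (Th x - Ph x) -> cen brK (Th y - Ph y) ->
      cen brK (Th (a *: x + y) - Ph (a *: x + y)).
    by move=> a x y hx hy; rewrite !hP addsubACA -scalerBr; apply: (cen_lin hK).
  have [V hV] := @vspace_of_pred F L (fun z => cen brK (Th z - Ph z)) c0 cl.
  move=> z [s hs]; apply/hV.
  have sub : (<<[seq brL p.1 p.2 | p <- s]>> <= V)%VS.
    apply/span_subvP => y /mapP [[u v] _ ->] /=; apply/hV.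
    have -> : Th (brL u v) = brK (Ph u) (Ph v).
      by apply: hcomp; rewrite subrr; exact: cen0 hK.
    by rewrite -(opprB (Ph (brL u v))); apply: (cenN hK); exact: hbr.
  exact: (subvP sub).
have F2 : forall b x, x \in gL b -> cen brK (pr gK b (Ph x) - Ph x).
  move=> b x hx; have [z [hz hxz]] := hev b x hx.
  have e : pr gK b (Ph x) = (Ph x - z) + pr gK b z.
    by rewrite -{1}(subrK z (Ph x)) hD; congr (_ + _); apply: (pr_id hK hxz).
  rewrite e addrAC [Ph x - z - _]addrAC subrr add0r.
  by apply: (cenD hK); [apply: (cenN hK) | apply: (cen_pr hK)].
have hZ'L : forall x, x \in ZL -> cen brL x by move=> x /hZL.
have fb : forall b, exists fb : 'Hom(L, K),
   [/\ forall x, fb x \in gK b,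
       forall x, x \in gL b -> cen brK (fb x - Ph x),
       forall x, x \in gL b -> der brL x -> fb x = Th x &
       forall x, x \in gL b -> fb x = 0 -> x = 0].
  move=> b.
  set Y := gL b.
  set Db := (DL :&: Y)%VS. set Zb := (ZL :&: Y)%VS.
  set Ab := (Zb :\: Db)%VS. set S := (Zb + Db)%VS. set Wb := (Y :\: S)%VS.
  set ZKb := (ZK :&: gK b)%VS. set Bb := (ZKb :\: DK)%VS.
  set Psi := (pr gK b \o Ph)%VF.
  have PsiE x : Psi x = pr gK b (Ph x) by rewrite comp_lfunE.
  have hAB : (\dim Ab <= \dim Bb)%N.
    have e1 := dimv_cap_compl Zb Db.
    have e2 := dimv_cap_compl ZKb DK.
    have i1 : (\dim (ZKb :&: DK) <= \dim (Zb :&: Db))%N.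
      have sub : (ZKb :&: DK <= Th @: (Zb :&: Db))%VS.
        apply/subvP => m /memv_capP [/memv_capP [mZ mb] mD].
        have [x [xD ex]] := thsurj m (proj1 (hDK m) mD).
        set x' := pr gL b x.
        have x'D : der brL x' := der_pr hL b xD.
        have x'b : x' \in gL b := pr_mem _ _ _.
        have ex' : Th x' = m.
          have h2 : Th (pr gL (~~ b) x) \in gK (~~ b).
            by apply: thev; [apply: (der_pr hL) | apply: pr_mem].
          have h1 : Th x' \in gK b by apply: thev.
          have e3 : Th x' + Th (pr gL (~~ b) x) = m by rewrite -hD (pr_add hL).
          have h3 : Th (pr gL (~~ b) x) \in gK b.
            by rewrite -(addKr (Th x') (Th (pr gL (~~ b) x))) e3; apply: memvD => //; rewrite memvN.
          by move: e3; rewrite (g0 hK h3 h2) addr0.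
        rewrite -ex'; apply: memv_img; rewrite !memv_cap x'b andbT.
        rewrite andbT; apply/andP; split; last by apply/hDL.
        apply/hZL; apply/hcen.
        have c1 := F1 x' x'D.
        have c2 : cen brK (Th x') by rewrite ex'; apply/hZK.
        by rewrite -(subKr (Th x') (Ph x')); apply: (cenB hK).
      apply: leq_trans (dimvS sub) _.
      have := limg_ker_dim Th (Zb :&: Db); lia.
    have i2 : (\dim Zb <= \dim ZKb)%N.
      set Y' := (Y :\: Zb)%VS.
      have sub : (gK b <= Psi @: Y' + ZKb)%VS.
        apply/subvP => m mb.
        have [x hx] := hsurj m.
        set x' := pr gL b x. set x'' := pr gL (~~ b) x.
        have c1 : cen brK (m - Psi x').
          have ca : cen brK (pr gK b (m - Ph x)) by apply: (cen_pr hK).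
          have cb : cen brK (pr gK b (Ph x'')).
            have := F2 (~~ b) x'' (pr_mem _ _ _).
            have e4 := pr_add hK b (Ph x'').
            have -> : pr gK b (Ph x'') = - (pr gK (~~ b) (Ph x'') - Ph x'').
              by rewrite opprB -{2}e4 addrK.
            by apply: (cenN hK).
          have -> : m - Psi x' = pr gK b (m - Ph x) + pr gK b (Ph x'').
            rewrite PsiE -{1}(pr_add hL b x) -/x' -/x'' (hD Ph).
            rewrite hB hD (pr_id hK mb).
            by rewrite opprD addrA subrK.
          exact: (cenD hK).
        have x'Y : x' \in (Y + Zb)%VS by apply: (subvP (addvSl Y Zb)); apply: pr_mem.
        have ex := addv_pi1_pi2 x'Y.
        set y1 := addv_pi1 Y Zb x' in ex. set y2 := addv_pi2 Y Zb x' in ex.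
        have y1Y : y1 \in Y' := memv_pi _ _ _.
        have y2Z : y2 \in Zb := memv_pi2 _ _ _.
        have -> : m = Psi y1 + (Psi y2 + (m - Psi x')).
          by rewrite addrA -hD ex addrC subrK.
        apply: memv_add; first exact: memv_img.
        rewrite memv_cap; apply/andP; split; last first.
          apply: memvD; first by rewrite PsiE; apply: pr_mem.
          by apply: memvB => //; rewrite PsiE; apply: pr_mem.
        apply/hZK; apply: (cenD hK) => //.
        move: y2Z; rewrite memv_cap => /andP [y2Z y2Y].
        rewrite -(subrK (Ph y2) (Psi y2)); apply: (cenD hK).
          by rewrite PsiE; apply: F2.
        by apply/hcen/hZL.
      have d1 := dimvS sub.
      have d2 := (dimv_add_leqif (Psi @: Y') ZKb).1.
      have d3 := limg_ker_dim Psi Y'.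
      have d4 := dimv_cap_compl Y Zb.
      have e5 : (Y :&: Zb)%VS = Zb by apply/capv_idPr; apply: capvSr.
      rewrite e5 in d4; have := hdim b; rewrite -/Y => hd.
      rewrite -/Y' in d4; lia.
    rewrite /Ab /Bb; lia.
  have [gg [ggB ggi]] := inj_dim hAB.
  have c12 : (Wb :&: S = 0)%VS by apply: capv_diff.
  have c21 : (S :&: Wb = 0)%VS by rewrite capvC.
  have c43 : (Ab :&: Db = 0)%VS by apply: capv_diff.
  have c34 : (Db :&: Ab = 0)%VS by rewrite capvC.
  have SY : (S <= Y)%VS by rewrite subv_add !capvSr.
  have ZbS : (Zb <= S)%VS by apply: addvSl.
  have DbS : (Db <= S)%VS by apply: addvSr.
  have AbZb : (Ab <= Zb)%VS by apply: diffvSl.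
  have BbZ : (Bb <= ZKb)%VS by apply: diffvSl.
  set p1 := daddv_pi Wb S. set p2 := daddv_pi S Wb.
  set p3 := daddv_pi Db Ab. set p4 := daddv_pi Ab Db.
  have p12 x : x \in Y -> p1 x + p2 x = x.
    move=> xY; apply: (daddv_pi_add c12).
    by rewrite addv_diff; apply: (subvP (addvSl Y S)).
  have p34 y : y \in S -> p3 y + p4 y = y.
    move=> yS; apply: (daddv_pi_add c34).
    by rewrite addvC addv_diff.
  pose fb := ((Psi \o p1)%VF + (((Th \o p3)%VF + (gg \o p4)%VF) \o p2)%VF).
  have fbE x : fb x = Psi (p1 x) + (Th (p3 (p2 x)) + gg (p4 (p2 x))).
    by rewrite /fb !add_lfunE !comp_lfunE add_lfunE !comp_lfunE.
  have inB y : gg (p4 y) \in Bb by apply: (subvP ggB); apply: memv_img; apply: memv_pi.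
  have p3D y : p3 y \in Db by apply: memv_pi.
  have p3der y : der brL (p3 y).
    by have := p3D y; rewrite memv_cap => /andP [/hDL h _].
  have p3Y y : p3 y \in Y.
    by have := p3D y; rewrite memv_cap => /andP [_ h].
  have p4Z y : p4 y \in ZL.
    have : p4 y \in Zb by apply: (subvP AbZb); apply: memv_pi.
    by rewrite memv_cap => /andP [h _].
  have ggc y : cen brK (gg (p4 y)).
    have : gg (p4 y) \in ZKb by apply: (subvP BbZ).
    by rewrite memv_cap => /andP [/hZK h _].
  have lift : forall x, x \in Y -> cen brK (fb x - Ph x).
    move=> x xY.
    have e : Ph x = Ph (p1 x) + (Ph (p3 (p2 x)) + Ph (p4 (p2 x))).
      by rewrite -!hD p34 ?p12 //; apply: memv_pi.
    rewrite fbE e !addsubACA.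
    apply: (cenD hK); first by rewrite PsiE; apply: F2; apply: (subvP (diffvSl Y S)); apply: memv_pi.
    apply: (cenD hK); first by apply: F1.
    apply: (cenB hK) => //; apply/hcen; apply/hZL; exact: p4Z.
  exists fb; split.
  - move=> x; rewrite fbE; apply: memvD; first by rewrite PsiE; apply: pr_mem.
    apply: memvD; first by apply: thev; [apply: p3der | apply: p3Y].
    have : gg (p4 (p2 x)) \in ZKb by apply: (subvP BbZ).
    by rewrite memv_cap => /andP [_ h].
  - exact: lift.
  - move=> x xY xD.
    have xDb : x \in Db by rewrite memv_cap xY andbT; apply/hDL.
    have xS : x \in S by apply: (subvP DbS).
    rewrite fbE (daddv_pi_other c12 xS) (daddv_pi_id c21 xS).
    rewrite (daddv_pi_id c34 xDb) (daddv_pi_other c43 xDb) !h0 add0r addr0 //.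
  - move=> x xY fx0.
    have cx : cen brL x.
      apply/hcen; have := lift x xY; rewrite fx0 sub0r => h.
      by rewrite -[Ph x]opprK; apply: (cenN hK).
    have xZb : x \in Zb by rewrite memv_cap xY andbT; apply/hZL.
    have xS : x \in S by apply: (subvP ZbS).
    move: fx0; rewrite fbE (daddv_pi_other c12 xS) (daddv_pi_id c21 xS) h0 add0r.
    have ex := p34 x xS.
    set d := p3 x in ex *. set a := p4 x in ex *.
    move=> e0.
    have ca : cen brL a by apply/hZL; apply: p4Z.
    have cd : cen brL d by rewrite -(addrK a d) ex; apply: (cenB hL).
    have ctd : cen brK (Th d).
      rewrite -(subrK (Ph d) (Th d)); apply: (cenD hK); first by apply: F1; apply: p3der.
      by apply/hcen.
    have tdB : Th d \in Bb.
      have -> : Th d = - gg a by apply/eqP; rewrite -addr_eq0 e0.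
      by rewrite memvN; apply: inB.
    have tdD : Th d \in DK by apply/hDK; apply: thD; apply: p3der.
    have td0 : Th d = 0.
      apply/eqP; rewrite -memv0 -(capv_diff ZKb DK) memv_cap tdB tdD //.
    have d0 : d = 0 by apply: thinj => //; apply: p3der.
    have a0 : a = 0.
      apply/eqP; rewrite -memv0 -ggi memv_cap memv_ker; apply/andP; split.
        exact: memv_pi.
      by move: e0; rewrite td0 add0r => ->.
    by rewrite -ex d0 a0 addr0.
have [f0 [f0a f0b f0c f0d]] := fb false.
have [f1 [f1a f1b f1c f1d]] := fb true.
pose f := ((f0 \o pr gL false)%VF + (f1 \o pr gL true)%VF).
have fE x : f x = f0 (pr gL false x) + f1 (pr gL true x).
  by rewrite /f add_lfunE !comp_lfunE.
have liftf x : cen brK (f x - Ph x).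
  rewrite fE -{3}(pr_add hL false x) /= (hD Ph) addsubACA.
  by apply: (cenD hK); [apply: f0b | apply: f1b]; apply: pr_mem.
have derf z : der brL z -> f z = Th z.
  move=> hz; rewrite fE f0c; [|exact: pr_mem|exact: der_pr].
  rewrite f1c; [|exact: pr_mem|exact: der_pr].
  by rewrite -hD (pr_add hL false).
have injf x : f x = 0 -> x = 0.
  rewrite fE => e.
  have [e0 e1] := g_uniq hK (f0a (pr gL false x)) (f1a (pr gL true x)) e.
  rewrite -(pr_add hL false x) (f0d _ (pr_mem _ _ _) e0) (f1d _ (pr_mem _ _ _) e1).
  by rewrite addr0.
have lk : lker f == 0%VS.
  apply/lker0P => x y e; apply/eqP; rewrite -subr_eq0; apply/eqP; apply: injf.
  by rewrite hB e subrr.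
have dimfull : forall (V : vectType F) (g : bool -> {vspace V}) br,
    lie_superalgebra g br -> \dim (fullv : {vspace V}) = (\dim (g false) + \dim (g true))%N.
  move=> V g br h; have := g_cap h false; case: (h) => [[hf _] _ _ _ _] c.
  by rewrite -hf dimv_disjoint_sum.
have limf : limg f = fullv.
  apply/eqP; rewrite eqEdim subvf /= limg_dim_eq.
    by rewrite (dimfull _ _ _ hL) (dimfull _ _ _ hK) !hdim.
  by rewrite capfv; apply/eqP.
exists f; split.
- by move=> a x y; rewrite hP.
- exists (f^-1)%VF; first exact: lker0_lfunK.
  by move=> y; apply: limg_lfunVK; rewrite limf memvf.
- move=> b x hx; rewrite fE.
  case: b hx => hx.
    by rewrite (pr_0 hL (b:=false) hx) h0 add0r (pr_id hL hx).
  by rewrite (pr_0 hL (b:=true) hx) h0 addr0 (pr_id hL hx).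
- move=> x y; rewrite derf; last exact: der_br.
  by apply: hcomp; apply: liftf.
Qed.
Unset Implicit Arguments.
Local Close Scope ring_scope.

Theorem theorem3p8 (F : fieldType)
    (hF2 : (2%N \notin [pchar F])%R) (hF3 : (3%N \notin [pchar F])%R)
    (L K : vectType F)
    (gL : bool -> {vspace L}) (brL : L -> L -> L)
    (gK : bool -> {vspace K}) (brK : K -> K -> K)
    (hL : lie_superalgebra gL brL) (hK : lie_superalgebra gK brK)
    (hdim0 : \dim (gL false) = \dim (gK false))
    (hdim1 : \dim (gL true) = \dim (gK true)) :
  isoclinic gL brL gK brK <-> ls_isomorphic gL brL gK brK.
Proof.
split; first apply: isoclinic_iso => //.
  by case.
exact: iso_isoclinic.
Qed.
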